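(* Let $G=(X,\Sigma,\longrightarrow,X_0)$ and $R=(Z,\Sigma,\longrightarrow,Z_0)$ be automata and $S=(Y,\Sigma,\longrightarrow,Y_0)\in\mathit{SPR}(G,R)$. Then $S\|G\sqsubseteq\mathcal{A}(E)\|G$ for some $\Sigma_{ucr}$-controllability set $E$ from $G$ to $R$. In particular, for any cc-simulation $\Phi$ from $S\|G$ to $R$, $S\|G\sqsubseteq\mathcal{A}(E(\Phi))\|G$, where $E(\Phi)=\{\theta_y:y\in Y\}$ and $\theta_y=\{(x,z):((y,x),z)\in\Phi\text{ and }(y,x)\text{ is reachable in }S\|G\}$.
   Context: An automaton is a 4-tuple $A=(Q,\Sigma,\longrightarrow,Q_0)$ with state set $Q$, finite event set $\Sigma$, ${\longrightarrow}\subseteq Q\times\Sigma\times Q$ and $\emptyset\neq Q_0\subseteq Q$. Write $q\xrightarrow{\sigma}q'$ for $(q,\sigma,q')\in{\longrightarrow}$, $q\xrightarrow{\sigma}$ if some such $q'$ exists; extend to strings. A state is reachable if reached from an initial state by some string. Events are partitioned into uncontrollable $\Sigma_{uc}$ and controllable $\Sigma_c$; $\Sigma_r\subseteq\Sigma$ is a fixed set of required events. $S\|G=(Y\times X,\Sigma,\longrightarrow,Y_0\times X_0)$ with $(y,x)\xrightarrow{\sigma}(y',x')$ iff $y\xrightarrow{\sigma}y'$ and $x\xrightarrow{\sigma}x'$ (similarly for any automaton in place of $S$). $S$ is $\Sigma_{uc}$-admissible w.r.t. $G$ if for every reachable $(y,x)$ of $S\|G$ and $\sigma\in\Sigma_{uc}$,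 $x\xrightarrow{\sigma}$ implies $(y,x)\xrightarrow{\sigma}$. For automata $A_1,A_2$ (state sets $Q_1,Q_2$, initial sets $Q_{01},Q_{02}$), $\Phi\subseteq Q_1\times Q_2$ is a simulation if (initial state) every $q_0\in Q_{01}$ has $p_0\in Q_{02}$ with $(q_0,p_0)\in\Phi$ and (forward) for $(q,p)\in\Phi$, $\sigma\in\Sigma$, $q\xrightarrow{\sigma}q'$ there is $p'$ with $p\xrightarrow{\sigma}p'$, $(q',p')\in\Phi$; a cc-simulation if moreover ($\Sigma_r$-backward) for $(q,p)\in\Phi$, $\sigma\in\Sigma_r$, $p\xrightarrow{\sigma}p'$ there is $q'$ with $q\xrightarrow{\sigma}q'$, $(q',p')\in\Phi$. $A_1\sqsubseteq A_2$, $A_1\sqsubseteq_{cc}A_2$ mean such relations exist. $\mathit{SPR}(G,R)$ is the set of $\Sigma_{uc}$-admissible supervisors $S$ with $S\|G\sqsubseteq_{cc}R$. For $W,W'\subseteq X\times Z$: $\mathit{match}_{G,R}(W,\sigma,W')$ iff for all $(x,z)\in W$ and $x\xrightarrow{\sigma}x'$ there is $z'$ with $z\xrightarrow{\sigma}z'$ and $(x',z')\in W'$. $E\subseteq\wp(X\times Z)$ is a $\Sigma_{ucr}$-controllability set from $G$ to $R$ if: (istate) some $W_0\in E$ satisfies $\forall x_0\in X_0\,\exists z_0\in Z_0\,((x_0,z_0)\in W_0)$; (a) for every $W\in E$, $\sigma\in\Sigma_{uc}$ there is $W'\in E$ with $\mathit{match}_{G,R}(W,\sigma,W')$; (b) for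 every $W\in E$, $(x,z)\in W$, $\sigma\in\Sigma_r$, $z\xrightarrow{\sigma}z'$, there exist $x'$, $W'\in E$ with $x\xrightarrow{\sigma}x'$, $(x',z')\in W'$, $\mathit{match}_{G,R}(W,\sigma,W')$. For any $E\subseteq\wp(X\times Z)$, $E^*=\bigcup_{\widetilde W\in E}\wp(\widetilde W)$, $\mathrm{Succ}_\sigma(W)=\bigcup_{(x,z)\in W}\{x':x\xrightarrow{\sigma}x'\}\times\{z':z\xrightarrow{\sigma}z'\}$, and $\mathcal{A}(E)=(E^*,\Sigma,\longrightarrow,I_E)$ with $I_E=\{W_0\in E^*:\forall x_0\in X_0\,\exists z_0\in Z_0\,((x_0,z_0)\in W_0)\text{ and }W_0\subseteq X_0\times Z_0\}$ and $W\xrightarrow{\sigma}W'$ iff (i) there exist $(x,z)\in W$, $(x',z')\in W'$ with $x\xrightarrow{\sigma}x'$, $z\xrightarrow{\sigma}z'$; (ii) $\mathit{match}_{G,R}(W,\sigma,W')$; (iii) $W'\subseteq\mathrm{Succ}_\sigma(W)$. *)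

(* Defs.v *)
From Stdlib Require Import List.
Set Implicit Arguments.

Record aut (Sigma Q : Type) := Aut {
  tr : Q -> Sigma -> Q -> Prop;
  init : Q -> Prop
}.

Definition wf_aut (Sigma Q : Type) (A : aut Sigma Q) : Prop := exists q, init A q.

Definition par (Sigma Y X : Type) (S : aut Sigma Y) (G : aut Sigma X) : aut Sigma (Y * X) :=
  {| tr := fun p s p' => tr S (fst p) s (fst p') /\ tr G (snd p) s (snd p');
     init := fun p => init S (fst p) /\ init G (snd p) |}.

Inductive reachable (Sigma Q : Type) (A : aut Sigma Q) : Q -> Prop :=
| reach_init : forall q, init A q -> reachable A q
| reach_step : forall q s q', reachable A q -> tr A q s q' -> reachable A q'.

Definition admissible (Sigma Y X : Type) (Suc : Sigma -> Prop)
  (S : aut Sigma Y) (G : aut Sigma X) : Prop :=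
  forall y x, reachable (par S G) (y, x) ->
  forall s, Suc s -> (exists x', tr G x s x') -> exists q', tr (par S G) (y, x) s q'.

Definition simulation (Sigma Q1 Q2 : Type) (A1 : aut Sigma Q1) (A2 : aut Sigma Q2)
  (Phi : Q1 -> Q2 -> Prop) : Prop :=
  (forall q0, init A1 q0 -> exists p0, init A2 p0 /\ Phi q0 p0) /\
  (forall q p s q', Phi q p -> tr A1 q s q' -> exists p', tr A2 p s p' /\ Phi q' p').

Definition cc_simulation (Sigma Q1 Q2 : Type) (Sr : Sigma -> Prop)
  (A1 : aut Sigma Q1) (A2 : aut Sigma Q2) (Phi : Q1 -> Q2 -> Prop) : Prop :=
  simulation A1 A2 Phi /\
  (forall q p s p', Phi q p -> Sr s -> tr A2 p s p' -> exists q', tr A1 q s q' /\ Phi q' p').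

Definition sim_le (Sigma Q1 Q2 : Type) (A1 : aut Sigma Q1) (A2 : aut Sigma Q2) : Prop :=
  exists Phi, simulation A1 A2 Phi.

Definition cc_le (Sigma Q1 Q2 : Type) (Sr : Sigma -> Prop)
  (A1 : aut Sigma Q1) (A2 : aut Sigma Q2) : Prop :=
  exists Phi, cc_simulation Sr A1 A2 Phi.

Definition SPR (Sigma X Z Y : Type) (Suc Sr : Sigma -> Prop)
  (G : aut Sigma X) (R : aut Sigma Z) (S : aut Sigma Y) : Prop :=
  admissible Suc S G /\ cc_le Sr (par S G) R.

Definition match_GR (Sigma X Z : Type) (G : aut Sigma X) (R : aut Sigma Z)
  (W : X -> Z -> Prop) (s : Sigma) (W' : X -> Z -> Prop) : Prop :=
  forall x z, W x z -> forall x', tr G x s x' -> exists z', tr R z s z' /\ W' x' z'.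

Definition ctrl_set (Sigma X Z : Type) (Suc Sr : Sigma -> Prop)
  (G : aut Sigma X) (R : aut Sigma Z) (E : (X -> Z -> Prop) -> Prop) : Prop :=
  (exists W0, E W0 /\ forall x0, init G x0 -> exists z0, init R z0 /\ W0 x0 z0) /\
  (forall W s, E W -> Suc s -> exists W', E W' /\ match_GR G R W s W') /\
  (forall W x z s z', E W -> W x z -> Sr s -> tr R z s z' ->
     exists x' W', tr G x s x' /\ E W' /\ W' x' z' /\ match_GR G R W s W').

Definition Estar (X Z : Type) (E : (X -> Z -> Prop) -> Prop) (W : X -> Z -> Prop) : Prop :=
  exists Wt, E Wt /\ forall x z, W x z -> Wt x z.

Definition Succ (Sigma X Z : Type) (G : aut Sigma X) (R : aut Sigma Z)
  (s : Sigma) (W : X -> Z -> Prop) (x' : X) (z' : Z) : Prop :=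
  exists x z, W x z /\ tr G x s x' /\ tr R z s z'.

Definition AE (Sigma X Z : Type) (G : aut Sigma X) (R : aut Sigma Z)
  (E : (X -> Z -> Prop) -> Prop) : aut Sigma {W : X -> Z -> Prop | Estar E W} :=
  {| init := fun W =>
       (forall x0, init G x0 -> exists z0, init R z0 /\ proj1_sig W x0 z0) /\
       (forall x z, proj1_sig W x z -> init G x /\ init R z);
     tr := fun W s W' =>
       (exists x z x' z', proj1_sig W x z /\ proj1_sig W' x' z' /\
                          tr G x s x' /\ tr R z s z') /\
       match_GR G R (proj1_sig W) s (proj1_sig W') /\
       (forall x' z', proj1_sig W' x' z' -> Succ G R s (proj1_sig W) x' z') |}.

Definition theta (Sigma X Y Z : Type) (S : aut Sigma Y) (G : aut Sigma X)
  (Phi : Y * X -> Z -> Prop) (y : Y) : X -> Z -> Prop :=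
  fun x z => Phi (y, x) z /\ reachable (par S G) (y, x).

Definition EPhi (Sigma X Y Z : Type) (S : aut Sigma Y) (G : aut Sigma X)
  (Phi : Y * X -> Z -> Prop) : (X -> Z -> Prop) -> Prop :=
  fun W => exists y, W = theta S G Phi y.

(* Main.v *)
Require Import Defs.
From Stdlib Require Import List Classical.

Lemma match_theta (Sigma X Y Z : Type) (G : aut Sigma X) (R : aut Sigma Z) (S : aut Sigma Y)
  (Phi : Y * X -> Z -> Prop) y s y' :
  simulation (par S G) R Phi -> tr S y s y' ->
  match_GR G R (theta S G Phi y) s (theta S G Phi y').
Proof.
  intros [_ Hf] Hy x z [HP Hr] x' Hx.
  destruct (Hf (y,x) z s (y',x') HP (conj Hy Hx)) as [z' [Hz' HP']].
  exists z'. split; auto. split; auto.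
  eapply reach_step; eauto. simpl; split; eauto.
Qed.

Lemma ctrl_part (Sigma X Y Z : Type) (Suc Sr : Sigma -> Prop)
  (G : aut Sigma X) (R : aut Sigma Z) (S : aut Sigma Y) (HS : wf_aut S)
  (Hadm : admissible Suc S G) Phi :
  cc_simulation Sr (par S G) R Phi -> ctrl_set Suc Sr G R (EPhi S G Phi).
Proof.
  intros [Hsim Hb]. pose proof Hsim as [Hi Hf].
  split; [|split].
  - destruct HS as [y0 Hy0]. exists (theta S G Phi y0). split. exists y0; reflexivity.
    intros x0 Hx0. destruct (Hi (y0,x0) (conj Hy0 Hx0)) as [p0 [Hp0 HP]].
    exists p0. split; auto. split; auto. apply reach_init. simpl; auto.
  - intros W s [y ->] Hs.
    destruct (classic (exists y', tr S y s y')) as [[y' Hy']|Hn].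
    + exists (theta S G Phi y'). split. exists y'; reflexivity.
      apply match_theta; auto.
    + exists (theta S G Phi y). split. exists y; reflexivity.
      intros x z [HP Hr] x' Hx. exfalso.
      destruct (Hadm y x Hr s Hs (ex_intro _ x' Hx)) as [[y' x''] [H1 H2]].
      apply Hn. exists y'. exact H1.
  - intros W x z s z' [y ->] [HP Hr] Hs Hz.
    destruct (Hb (y,x) z s z' HP Hs Hz) as [[y' x'] [[Hy Hx] HP']].
    exists x', (theta S G Phi y'). split; auto. split. exists y'; reflexivity.
    split. split; auto. eapply reach_step; eauto. simpl; split; eauto.
    apply match_theta; auto.
Qed.

Lemma sim_part (Sigma X Y Z : Type) (Sr : Sigma -> Prop)
  (G : aut Sigma X) (R : aut Sigma Z) (S : aut Sigma Y) Phi :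
  cc_simulation Sr (par S G) R Phi ->
  sim_le (par S G) (par (AE G R (EPhi S G Phi)) G).
Proof.
  intros [Hsim _]. pose proof Hsim as [Hi Hf].
  exists (fun (q : Y * X) (p : {W : X -> Z -> Prop | Estar (EPhi S G Phi) W} * X) =>
    snd p = snd q /\ (forall a b, proj1_sig (fst p) a b -> theta S G Phi (fst q) a b) /\
    exists z, proj1_sig (fst p) (snd q) z).
  split.
  - intros [y0 x0] Hq0. destruct Hq0 as [Hy0 Hx0]. simpl in *.
    set (W0 := fun x z => init G x /\ init R z /\ theta S G Phi y0 x z).
    assert (HE : Estar (EPhi S G Phi) W0).
    { exists (theta S G Phi y0). split. exists y0; reflexivity.
      intros x z [_ [_ H]]; exact H. }
    assert (Hcov : forall x, init G x -> exists z, init R z /\ W0 x z).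
    { intros x Hx. destruct (Hi (y0,x) (conj Hy0 Hx)) as [p0 [Hp0 HP]].
      exists p0. split; auto. unfold W0. split; auto. split; auto.
      split; auto. apply reach_init. simpl; auto. }
    exists (exist _ W0 HE, x0). simpl. split.
    + split; [split|auto]. intros x Hx. destruct (Hcov x Hx) as [z [Hz HW]]. eauto.
      intros x z [H1 [H2 _]]. auto.
    + split; auto. split. intros a b [_ [_ H]]; exact H.
      destruct (Hcov x0 Hx0) as [z [_ HW]]. eauto.
  - intros [y x] [W x2] s [y' x'] [Hx2 [Hsub [z HWz]]] [Hy Hx].
    simpl in *. subst x2.
    set (W' := fun a' b' => Succ G R s (proj1_sig W) a' b' /\ theta S G Phi y' a' b').
    assert (HE : Estar (EPhi S G Phi) W').
    { exists (theta S G Phi y'). split. exists y'; reflexivity.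
      intros a b [_ H]; exact H. }
    destruct (Hsub _ _ HWz) as [HP Hr].
    destruct (Hf (y,x) z s (y',x') HP (conj Hy Hx)) as [z' [Hz' HP']].
    assert (Hr' : reachable (par S G) (y', x')).
    { eapply reach_step; eauto. simpl; split; eauto. }
    assert (HW' : W' x' z').
    { split. exists x, z. auto. split; auto. }
    exists (exist _ W' HE, x'). simpl. split; [split; [split; [|split]|]|].
    + exists x, z, x', z'. auto.
    + intros a b HWab a' Ha.
      destruct (match_theta _ _ _ _ _ _ _ _ _ _ _ Hsim Hy _ _ (Hsub _ _ HWab) _ Ha) as [b' [Hb' Ht]].
      exists b'. split; auto. split; auto. exists a, b; auto.
    + intros a' b' [H _]; exact H.
    + auto.
    + split; auto. split. intros a b [_ H]; exact H. eauto.
Qed.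

Theorem lemma8 (Sigma X Y Z : Type) (Suc Sr : Sigma -> Prop)
  (HSigma_fin : exists l : list Sigma, forall s, In s l)
  (G : aut Sigma X) (R : aut Sigma Z) (S : aut Sigma Y)
  (HG : wf_aut G) (HR : wf_aut R) (HS : wf_aut S)
  (HSPR : SPR Suc Sr G R S) :
  (exists E, ctrl_set Suc Sr G R E /\ sim_le (par S G) (par (AE G R E) G)) /\
  (forall Phi : Y * X -> Z -> Prop, cc_simulation Sr (par S G) R Phi ->
     ctrl_set Suc Sr G R (EPhi S G Phi) /\
     sim_le (par S G) (par (AE G R (EPhi S G Phi)) G)).
Proof.
  destruct HSPR as [Hadm [Phi HPhi]].
  assert (H : forall Phi, cc_simulation Sr (par S G) R Phi ->
     ctrl_set Suc Sr G R (EPhi S G Phi) /\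
     sim_le (par S G) (par (AE G R (EPhi S G Phi)) G)).
  { intros P HP. split. eapply ctrl_part; eauto. eapply sim_part; eauto. }
  split; auto. exists (EPhi S G Phi). auto.
Qed.
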